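(* The set of all values $|\Lambda_h:\Gamma|$ for $\Gamma\in\mathrm{WR}(\Lambda_h)$ equals the set of integers $3^u j^2 d(2m-n)n$, where $u\in\{0,1\}$, $j,d,m,n\in\mathbb{Z}_{>0}$, $d$ is $1$ or a product of distinct primes congruent to $1$ modulo $3$, $\gcd(m,n)=1$, $3\nmid(m+n)$, and $1\le m/n\le 2$.
   Context: $\Lambda_h = \begin{bmatrix} 1 & -1/2 \\ 0 & \sqrt3/2\end{bmatrix}\mathbb{Z}^2$. For a full-rank sublattice $\Gamma\subseteq\Lambda_h$, $|\Lambda_h:\Gamma|=\det\Gamma/\det\Lambda_h$. A full-rank lattice is well-rounded (WR) if it has a basis consisting of vectors of minimal nonzero Euclidean norm; $\mathrm{WR}(\Lambda_h)$ is the set of full-rank WR sublattices of $\Lambda_h$. *)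

(* Defs.v *)
From Stdlib Require Import Reals ZArith List Znumtheory.
Open Scope R_scope.

Definition vec := (R * R)%type.

(* The hexagonal lattice Lambda_h = [[1, -1/2],[0, sqrt3/2]] Z^2:
   lh a b is the image of the integer vector (a,b). *)
Definition lh (a b : Z) : vec := (IZR a - IZR b / 2, IZR b * (sqrt 3 / 2)).
Definition in_Lh (x : vec) : Prop := exists a b : Z, x = lh a b.

Definition det2 (v w : vec) : R := fst v * snd w - snd v * fst w.

Definition enorm (v : vec) : R := sqrt (fst v ^ 2 + snd v ^ 2).

Definition span_Z (v w x : vec) : Prop :=
  exists k l : Z, x = (IZR k * fst v + IZR l * fst w, IZR k * snd v + IZR l * snd w).

Definition lattice_basis (G : vec -> Prop) (v w : vec) : Prop :=
  det2 v w <> 0 /\ forall x, G x <-> span_Z v w x.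

Definition full_rank_sublattice_Lh (G : vec -> Prop) : Prop :=
  (exists v w, lattice_basis G v w) /\ forall x, G x -> in_Lh x.

Definition lattice_det (G : vec -> Prop) (d : R) : Prop :=
  exists v w, lattice_basis G v w /\ d = Rabs (det2 v w).

Definition det_Lh : R := Rabs (det2 (lh 1 0) (lh 0 1)).

Definition lattice_index (G : vec -> Prop) (N : R) : Prop :=
  exists d, lattice_det G d /\ N = d / det_Lh.

Definition well_rounded (G : vec -> Prop) : Prop :=
  exists v w, lattice_basis G v w /\
    (forall x, G x -> x <> (0, 0) -> enorm v <= enorm x) /\
    (forall x, G x -> x <> (0, 0) -> enorm w <= enorm x).

Definition prod_distinct_primes_1mod3 (d : Z) : Prop :=
  exists ps : list Z, NoDup ps /\
    (forall p, In p ps -> prime p /\ Z.modulo p 3 = 1%Z) /\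
    d = fold_right Z.mul 1%Z ps.

(* Main.v *)
Require Import Defs.
From Stdlib Require Import Reals ZArith List Znumtheory Lia Lra Psatz Classical.
Module MC.
From mathcomp Require Import all_boot all_order all_algebra all_fingroup all_solvable all_field.
From mathcomp Require Import ring.
Import GRing.Theory.
Local Open Scope nat_scope.

Lemma L2 (p : nat) : prime p -> p %% 3 = 1 -> exists x : nat, p %| x ^ 2 + x + 1.
Proof.
move=> pr p3.
have dv : 3 %| #|[set: {unit 'F_p}]|.
  rewrite finalg.card_finField_unit card_Fp //.
  have : p = 3 * (p %/ 3) + 1 by rewrite {1}(divn_eq p 3) p3 mulnC.
  move=> ->; by rewrite addn1 /= dvdn_mulr.
have [u _ ou] := Cauchy (erefl : prime 3) dv.
set y : 'F_p := val u.
have y3 : (y ^+ 3 = 1)%R.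
  by rewrite /y -FinRing.val_unitX -ou expg_order FinRing.val_unit1.
have y1 : (y != 1)%R.
  apply/eqP=> e; have : u = 1%g by apply: val_inj; rewrite FinRing.val_unit1.
  by move=> e'; move: ou; rewrite e' order1.
have y0 : (y ^+ 2 + y + 1 = 0)%R.
  have : ((y - 1) * (y ^+ 2 + y + 1) = 0)%R.
    have -> : ((y - 1) * (y ^+ 2 + y + 1) = y ^+ 3 - 1)%R by ring.
    by rewrite y3 subrr.
  by move/eqP; rewrite mulf_eq0 subr_eq0 (negbTE y1) /= => /eqP.
exists (nat_of_ord y).
rewrite (dvdn_pcharf (pchar_Fp pr)) natrD natrD natrX.
by rewrite natr_Zp y0.
Qed.

Lemma L1 (q a b : nat) : prime q -> q %% 3 = 2 -> q %| a ^ 2 + (q - 1) * a * b + b ^ 2 ->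
  q %| a /\ q %| b.
Proof.
move=> pr q3 hd.
have ch := pchar_Fp pr.
set A : 'F_q := (a%:R)%R. set B : 'F_q := (b%:R)%R.
have qm1 : ((q - 1)%:R = - 1 :> 'F_q)%R.
  have q1 : 1 <= q by apply: prime_gt0.
  by rewrite natrB // pchar_Fp_0 // sub0r.
have E : (A ^+ 2 - A * B + B ^+ 2 = 0)%R.
  move: hd; rewrite (dvdn_pcharf ch) !natrD !natrM qm1 => /eqP E0; rewrite -[RHS]E0.
  rewrite /A /B; ring.
rewrite !(dvdn_pcharf ch) -/A -/B.
have [B0|Bn0] := eqVneq B 0%R.
  move: E; rewrite B0 mulr0 expr0n /= subr0 addr0 => /eqP.
  by rewrite expf_eq0 /= => ->.
exfalso.
set y : 'F_q := (- (A / B))%R.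
have y0 : (y ^+ 2 + y + 1 = 0)%R.
  have -> : (y ^+ 2 + y + 1 = (A ^+ 2 - A * B + B ^+ 2) / B ^+ 2)%R.
    rewrite /y; field; exact: Bn0.
  by rewrite E mul0r.
have y3 : (y ^+ 3 = 1)%R.
  apply/eqP; rewrite -subr_eq0.
  have -> : (y ^+ 3 - 1 = (y - 1) * (y ^+ 2 + y + 1))%R by ring.
  by rewrite y0 mulr0.
have y1 : (y != 1)%R.
  apply/eqP=> e; move: y0; rewrite e => /eqP.
  have -> : (1 ^+ 2 + 1 + 1 = 3%:R :> 'F_q)%R by rewrite expr1n; ring.
  rewrite -(dvdn_pcharf ch) dvdn_prime2 //= => /eqP e3.
  by move: q3; rewrite e3.
have yu : (y \is a GRing.unit)%R.
  by apply/unitrP; exists (y ^+ 2)%R; rewrite -exprSr -exprS y3.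
pose u : {unit 'F_q} := FinRing.Unit yu.
have u3 : (u ^+ 3 = 1)%g.
  by apply: val_inj; rewrite FinRing.val_unitX FinRing.val_unit1 /=.
have ou : #[u]%g = 3.
  have d3 : #[u]%g %| 3 by rewrite order_dvdn u3.
  have := dvdn_leq (erefl : 0 < 3) d3.
  have := order_gt0 u.
  move: d3; case Eo: (#[u]%g) => [|[|[|[|n]]]] //.
  move=> _ _ _; exfalso; move: y1.
  have : u = 1%g by apply/eqP; rewrite -order_eq1 Eo.
  move=> e; have <- : val u = y by []. by rewrite e FinRing.val_unit1 eqxx.
have := order_dvdG (in_setT u).
rewrite ou finalg.card_finField_unit card_Fp //.
have : q = 3 * (q %/ 3) + 2 by rewrite {1}(divn_eq q 3) q3 mulnC.
move=> ->. rewrite addn2 /=.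
by rewrite -[(3 * _).+1]addn1 dvdn_addr ?dvdn_mulr.
Qed.
From mathcomp Require Import zify.

Lemma prime_conv (p : nat) : Znumtheory.prime (Z.of_nat p) -> prime p.
Proof.
move=> hp; have h1 := Znumtheory.prime_ge_2 _ hp.
apply/primeP; split; first by lia.
move=> d /dvdnP [k hk].
have hd : Z.divide (Z.of_nat d) (Z.of_nat p).
  exists (Z.of_nat k); rewrite hk; lia.
have := Znumtheory.prime_divisors _ hp _ hd; lia.
Qed.

Lemma dvd_conv (d n : nat) : Nat.divide d n <-> d %| n.
Proof.
split.
  by move=> [k hk]; apply/dvdnP; exists k.
by move/dvdnP=> [k hk]; exists k.
Qed.

Lemma mod_conv (p r : nat) : Nat.modulo p 3 = r -> p %% 3 = r.
Proof.
move=> <-.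
have h1 := divn_eq p 3; have h2 : p %% 3 < 3 by rewrite ltn_pmod.
have h3 := Nat.div_mod_eq p 3; have h4 := Nat.mod_upper_bound p 3.
lia.
Qed.

Lemma L1N (q a b : nat) : Znumtheory.prime (Z.of_nat q) -> Nat.modulo q 3 = 2 ->
  Nat.divide q (a*a + (q-1)*a*b + b*b) -> Nat.divide q a /\ Nat.divide q b.
Proof.
move=> /prime_conv pr /mod_conv m3 /dvd_conv d.
rewrite !dvd_conv; apply: L1 => //.
Qed.

Lemma L2N (p : nat) : Znumtheory.prime (Z.of_nat p) -> Nat.modulo p 3 = 1 ->
  exists x, Nat.divide p (x*x + x + 1).
Proof.
move=> /prime_conv pr /mod_conv m3.
have [x hx] := @L2 p pr m3; exists x; rewrite dvd_conv.
by move: hx; rewrite !expnS !expn0 !muln1.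
Qed.
End MC.

Set Bullet Behavior "Strict Subproofs".

Open Scope Z_scope.

Definition Qf (a b : Z) : Z := a*a - a*b + b*b.

Lemma Qf_nonneg a b : 0 <= Qf a b.
Proof. unfold Qf. nia. Qed.

Lemma Qf_pos a b : (a <> 0 \/ b <> 0) -> 0 < Qf a b.
Proof.
  intros H. unfold Qf.
  assert (E : 4 * (a*a - a*b + b*b) = (2*a - b)*(2*a-b) + 3*(b*b)) by ring.
  destruct (Z.eq_dec b 0).
  - subst. destruct H as [H|H]; [|lia]. nia.
  - nia.
Qed.

Lemma Qf_mul a b c d : Qf (a*c - b*d) (a*d + b*c - b*d) = Qf a b * Qf c d.
Proof. unfold Qf; ring. Qed.

Definition rep (M : Z) : Prop := exists a b, M = Qf a b.

Lemma rep_mul M N : rep M -> rep N -> rep (M * N).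
Proof. intros [a [b ->]] [c [d ->]]. exists (a*c - b*d), (a*d + b*c - b*d). now rewrite Qf_mul. Qed.

Lemma pigeon (f : nat -> nat) (N M : nat) : (M < N)%nat -> (forall i, (i < N)%nat -> (f i < M)%nat) ->
  exists i j, (i < N)%nat /\ (j < N)%nat /\ i <> j /\ f i = f j.
Proof.
  intros HMN Hf. apply NNPP. intros Hn.
  assert (Hnd : NoDup (map f (seq 0 N))).
  { apply NoDup_map_NoDup_ForallPairs; [|apply seq_NoDup].
    intros x y Hx Hy Hxy. apply in_seq in Hx, Hy.
    apply NNPP; intro Hne. apply Hn. exists x, y. repeat split; lia. }
  assert (Hinc : incl (map f (seq 0 N)) (seq 0 M)).
  { intros z Hz. apply in_map_iff in Hz. destruct Hz as [x [<- Hx]].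
    apply in_seq in Hx. apply in_seq. specialize (Hf x). lia. }
  pose proof (NoDup_incl_length Hnd Hinc) as L.
  rewrite length_map, !length_seq in L. lia.
Qed.

Lemma ZL2 p : prime p -> p mod 3 = 1 -> exists x, (p | x*x + x + 1).
Proof.
  intros Hp H3. pose proof (prime_ge_2 _ Hp) as H2.
  assert (Hp' : prime (Z.of_nat (Z.to_nat p))) by (rewrite Z2Nat.id by lia; assumption).
  assert (Hm : Nat.modulo (Z.to_nat p) 3 = 1%nat).
  { apply Nat2Z.inj. rewrite Nat2Z.inj_mod, Z2Nat.id by lia. simpl. lia. }
  destruct (MC.L2N _ Hp' Hm) as [x [z Hz]].
  exists (Z.of_nat x), (Z.of_nat z).
  apply (f_equal Z.of_nat) in Hz.
  rewrite !Nat2Z.inj_add, !Nat2Z.inj_mul, Z2Nat.id in Hz by lia. simpl in Hz. lia.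
Qed.

Lemma ZL1 q a b : prime q -> q mod 3 = 2 -> (q | Qf a b) -> (q | a) /\ (q | b).
Proof.
  intros Hq H3 [k Hk]. pose proof (prime_ge_2 _ Hq) as H2.
  pose (a' := a mod q). pose (b' := b mod q).
  assert (Ha : a = q * (a / q) + a') by (apply Z_div_mod_eq_full).
  assert (Hb : b = q * (b / q) + b') by (apply Z_div_mod_eq_full).
  assert (Ra : 0 <= a' < q) by (apply Z.mod_pos_bound; lia).
  assert (Rb : 0 <= b' < q) by (apply Z.mod_pos_bound; lia).
  set (s := a / q) in *. set (t := b / q) in *.
  assert (Hq' : prime (Z.of_nat (Z.to_nat q))) by (rewrite Z2Nat.id by lia; assumption).
  assert (Hm : Nat.modulo (Z.to_nat q) 3 = 2%nat).
  { apply Nat2Z.inj. rewrite Nat2Z.inj_mod, Z2Nat.id by lia. simpl. lia. }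
  assert (Hd : Nat.divide (Z.to_nat q) (Z.to_nat a' * Z.to_nat a' + (Z.to_nat q - 1) * Z.to_nat a' * Z.to_nat b' + Z.to_nat b' * Z.to_nat b')).
  { set (X := 2*s*a' - s*b' - t*a' + 2*t*b' + q*(s*s - s*t + t*t)).
    assert (E : Qf a b = Qf a' b' + q*X).
    { unfold X. rewrite Ha, Hb. unfold Qf. ring. }
    assert (E2 : a'*a' + (q-1)*a'*b' + b'*b' = (k - X + a'*b') * q).
    { transitivity (Qf a' b' + q*(a'*b')); [unfold Qf; ring|].
      assert (Qf a' b' = k*q - q*X) by lia. rewrite H. ring. }
    assert (P : 0 <= k - X + a'*b').
    { assert (0 <= a'*a' + (q-1)*a'*b' + b'*b') by nia. nia. }
    exists (Z.to_nat (k - X + a'*b')).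
    apply Nat2Z.inj.
    rewrite Nat2Z.inj_mul, !Nat2Z.inj_add, !Nat2Z.inj_mul, Nat2Z.inj_sub, !Z2Nat.id by lia.
    simpl. rewrite <- E2. lia. }
  destruct (MC.L1N _ _ _ Hq' Hm Hd) as [[x Hx] [y Hy]].
  apply (f_equal Z.of_nat) in Hx, Hy.
  rewrite Nat2Z.inj_mul, !Z2Nat.id in Hx, Hy by lia.
  split.
  - exists (s + Z.of_nat x). lia.
  - exists (t + Z.of_nat y). lia.
Qed.

Lemma prime_not2 p : prime p -> p mod 3 = 1 -> ~ (2 | p).
Proof.
  intros Hp H3 H2. pose proof (prime_ge_2 _ Hp).
  destruct (prime_divisors _ Hp _ H2) as [h|[h|[h|h]]]; try lia.
  subst p. compute in H3. discriminate.
Qed.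

Lemma Qf_2p X Y p : prime p -> p mod 3 = 1 -> Qf X Y = 2 * p -> False.
Proof.
  intros Hp H3 HQ.
  destruct (Z.Even_or_Odd X) as [[x' ->]|[x' ->]]; destruct (Z.Even_or_Odd Y) as [[y' ->]|[y' ->]].
  - apply (prime_not2 p Hp H3). exists (Qf x' y').
    assert (Qf (2*x') (2*y') = 4 * Qf x' y') by (unfold Qf; ring). lia.
  - assert (E : Qf (2*x') (2*y'+1) = 2*(2*x'*x' - 2*x'*y' - x' + 2*y'*y' + 2*y') + 1) by (unfold Qf; ring).
    remember (2*x'*x' - 2*x'*y' - x' + 2*y'*y' + 2*y') as W. lia.
  - assert (E : Qf (2*x'+1) (2*y') = 2*(2*x'*x' + 2*x' - 2*x'*y' - y' + 2*y'*y') + 1) by (unfold Qf; ring).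
    remember (2*x'*x' + 2*x' - 2*x'*y' - y' + 2*y'*y') as W. lia.
  - assert (E : Qf (2*x'+1) (2*y'+1) = 2*(2*x'*x' + 2*x' - 2*x'*y' - x' - y' + 2*y'*y' + 2*y') + 1) by (unfold Qf; ring).
    remember (2*x'*x' + 2*x' - 2*x'*y' - x' - y' + 2*y'*y' + 2*y') as W. lia.
Qed.

Lemma fermat3 p : prime p -> p mod 3 = 1 -> rep p.
Proof.
  intros Hp H3. pose proof (prime_ge_2 _ Hp) as H2.
  destruct (ZL2 p Hp H3) as [x [c Hc]].
  pose (k := Z.sqrt p).
  destruct (Z.sqrt_spec p ltac:(lia)) as [Hk1 Hk2]. fold k in Hk1, Hk2.
  assert (Hk0 : 0 <= k) by apply Z.sqrt_nonneg.
  assert (Hkp : k * k < p).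
  { destruct (Z.eq_dec (k*k) p) as [E|E]; [|lia].
    assert (Hd : (k | p)) by (exists k; lia).
    destruct (prime_divisors _ Hp _ Hd) as [h|[h|[h|h]]]; rewrite h in E; try lia.
    assert (p * (p - 1) = 0) by lia. destruct (Z.mul_eq_0 p (p-1)) as [h1 _]. lia. }
  pose (K := Z.to_nat (k+1)).
  pose (f := fun n : nat => Z.to_nat ((Z.of_nat (n / K) + x * Z.of_nat (n mod K)) mod p)).
  assert (HKz : Z.of_nat K = k + 1) by (unfold K; rewrite Z2Nat.id; lia).
  destruct (pigeon f (K*K) (Z.to_nat p)) as [i [j [Hi [Hj [Hij Hf]]]]].
  { apply Nat2Z.inj_lt. rewrite Nat2Z.inj_mul, HKz, Z2Nat.id by lia. simpl in Hk2. lia. }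
  { intros n _. unfold f. apply Nat2Z.inj_lt.
    pose proof (Z.mod_pos_bound (Z.of_nat (n / K) + x * Z.of_nat (n mod K)) p ltac:(lia)).
    rewrite !Z2Nat.id by lia. lia. }
  assert (HK : (0 < K)%nat) by lia.
  assert (Bi1 : (i / K < K)%nat) by (apply Nat.Div0.div_lt_upper_bound; lia).
  assert (Bj1 : (j / K < K)%nat) by (apply Nat.Div0.div_lt_upper_bound; lia).
  assert (Bi2 : (i mod K < K)%nat) by (apply Nat.mod_upper_bound; lia).
  assert (Bj2 : (j mod K < K)%nat) by (apply Nat.mod_upper_bound; lia).
  pose proof (Nat.div_mod_eq i K) as Di. pose proof (Nat.div_mod_eq j K) as Dj.
  set (i1 := (i / K)%nat) in *. set (i2 := (i mod K)%nat) in *.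
  set (j1 := (j / K)%nat) in *. set (j2 := (j mod K)%nat) in *.
  set (A := Z.of_nat i1 + x * Z.of_nat i2). set (B := Z.of_nat j1 + x * Z.of_nat j2).
  assert (HAB : A mod p = B mod p).
  { unfold f in Hf. fold i1 i2 j1 j2 A B in Hf. apply Z2Nat.inj in Hf; auto.
    - apply Z.mod_pos_bound; lia.
    - apply Z.mod_pos_bound; lia. }
  pose proof (Z_div_mod_eq_full A p) as DA. pose proof (Z_div_mod_eq_full B p) as DB.
  set (X := Z.of_nat i1 - Z.of_nat j1). set (Y := Z.of_nat i2 - Z.of_nat j2).
  assert (HXY : X + x * Y = p * (A / p - B / p)).
  { unfold X, Y. assert (A - B = p * (A / p - B / p)) by lia. unfold A, B in H. lia. }
  set (w := A / p - B / p) in HXY.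
  assert (HQ : Qf X Y = p * (Y*Y*c + p*w*w - 2*w*x*Y - w*Y)).
  { assert (EX : X = p*w - x*Y) by lia. rewrite EX. unfold Qf.
    transitivity (Y*Y*(x*x+x+1) + p*(p*w*w - 2*w*x*Y - w*Y)); [ring|]. rewrite Hc. ring. }
  assert (Hnz : X <> 0 \/ Y <> 0).
  { apply NNPP; intro Hn. apply Hij.
    assert (X = 0 /\ Y = 0) as [E1 E2] by tauto. unfold X, Y in E1, E2.
    assert (i1 = j1) by lia. assert (i2 = j2) by lia. rewrite Di, Dj. congruence. }
  pose proof (Qf_pos X Y Hnz) as Hpos.
  assert (BX : - k <= X <= k) by (unfold X; lia).
  assert (BY : - k <= Y <= k) by (unfold Y; lia).
  assert (Hlt : Qf X Y < 3 * p).
  { unfold Qf.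
    assert (0 <= (k-X)*(k+X)) by (apply Z.mul_nonneg_nonneg; lia).
    assert (0 <= (k-Y)*(k+Y)) by (apply Z.mul_nonneg_nonneg; lia).
    assert (0 <= (k-X)*(k-Y)) by (apply Z.mul_nonneg_nonneg; lia).
    assert (0 <= (k+X)*(k+Y)) by (apply Z.mul_nonneg_nonneg; lia).
    assert (E1 : (k-X)*(k+X) = k*k - X*X) by ring.
    assert (E2 : (k-Y)*(k+Y) = k*k - Y*Y) by ring.
    assert (E3 : (k-X)*(k-Y) + (k+X)*(k+Y) = 2*(k*k) + 2*(X*Y)) by ring.
    lia. }
  set (r := Y*Y*c + p*w*w - 2*w*x*Y - w*Y) in HQ.
  assert (R0 : 0 < r).
  { destruct (Z_lt_le_dec 0 r) as [|h]; [lia|]. assert (p * r <= 0) by (apply Z.mul_nonneg_nonpos; lia). lia. }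
  assert (R3 : r < 3).
  { destruct (Z_lt_le_dec r 3) as [|h]; [lia|]. assert (p * 3 <= p * r) by (apply Z.mul_le_mono_nonneg_l; lia). lia. }
  assert (r = 1 \/ r = 2) as [R|R] by lia.
  - exists X, Y. rewrite HQ, R. ring.
  - exfalso. apply (Qf_2p X Y p Hp H3). lia.
Qed.

Open Scope Z_scope.

Definition Sset (M : Z) : Prop := exists u j d, (u = 0 \/ u = 1) /\ 0 < j /\ 0 < d /\
  prod_distinct_primes_1mod3 d /\ M = 3 ^ u * j ^ 2 * d.

Lemma fold_pos ps : (forall p, In p ps -> prime p /\ p mod 3 = 1) -> 0 < fold_right Z.mul 1 ps.
Proof.
  induction ps as [|a l IH]; simpl; intros H; [lia|].
  destruct (H a (or_introl eq_refl)) as [Ha _]. pose proof (prime_ge_2 _ Ha).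
  assert (0 < fold_right Z.mul 1 l) by (apply IH; auto). nia.
Qed.

Lemma fold_app_mid l1 p l2 : fold_right Z.mul 1 (l1 ++ p :: l2) = p * fold_right Z.mul 1 (l1 ++ l2).
Proof. induction l1 as [|a l IH]; simpl; [ring|]. rewrite IH. ring. Qed.

Lemma S_1 : Sset 1.
Proof.
  exists 0, 1, 1. split; [lia|]. split; [lia|]. split; [lia|]. split.
  - exists nil. split; [constructor|]. split; [intros p []|reflexivity].
  - reflexivity.
Qed.

Lemma S_sq M k : Sset M -> 0 < k -> Sset (k*k*M).
Proof.
  intros [u [j [d [Hu [Hj [Hd [Hp E]]]]]]] Hk. exists u, (k*j), d. repeat split; auto; try nia.
  all: subst M; ring.
Qed.

Lemma S_3 M : Sset M -> Sset (3*M).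
Proof.
  intros [u [j [d [Hu [Hj [Hd [Hp E]]]]]]]. destruct Hu as [->| ->].
  - exists 1, j, d. repeat split; auto; try lia. all: subst M; ring.
  - exists 0, (3*j), d. repeat split; auto; try lia. all: subst M; ring.
Qed.

Lemma S_p M p : Sset M -> prime p -> p mod 3 = 1 -> Sset (p*M).
Proof.
  intros [u [j [d [Hu [Hj [Hd [[ps [Hnd [Hps Hdp]]] E]]]]]]] Hp H3.
  pose proof (prime_ge_2 _ Hp).
  destruct (in_dec Z.eq_dec p ps) as [Hin|Hin].
  - destruct (in_split _ _ Hin) as [l1 [l2 ->]].
    assert (Hps' : forall q, In q (l1 ++ l2) -> prime q /\ q mod 3 = 1).
    { intros q Hq. apply Hps. apply in_app_iff in Hq. apply in_app_iff. simpl. tauto. }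
    exists u, (p*j), (fold_right Z.mul 1 (l1 ++ l2)).
    split; [auto|]. split; [nia|]. split; [apply fold_pos; auto|]. split.
    + exists (l1 ++ l2). split; [eapply NoDup_remove_1; eauto|]. split; [exact Hps'|reflexivity].
    + subst M d. rewrite fold_app_mid. ring.
  - exists u, j, (p*d).
    split; [auto|]. split; [nia|]. split; [nia|]. split.
    + exists (p :: ps). split; [constructor; auto|]. split.
      * intros q [<-|Hq]; auto.
      * simpl. lia.
    + subst M. ring.
Qed.

Lemma rep_pdp d : prod_distinct_primes_1mod3 d -> rep d.
Proof.
  intros [ps [_ [Hps ->]]]. induction ps as [|a l IH]; simpl.
  - exists 1, 0. reflexivity.
  - apply rep_mul.
    + destruct (Hps a (or_introl eq_refl)). apply fermat3; auto.
    + apply IH. intros q Hq. apply Hps. simpl; auto.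
Qed.

Lemma rep_S M : Sset M -> rep M.
Proof.
  intros [u [j [d [Hu [Hj [Hd [Hp E]]]]]]]. subst M.
  apply rep_mul; [apply rep_mul|].
  - destruct Hu as [->| ->]; [exists 1, 0; reflexivity|exists 2, 1; reflexivity].
  - exists j, 0. unfold Qf. ring.
  - apply rep_pdp; auto.
Qed.

Lemma exists_prime_div n : 1 < n -> exists p, prime p /\ (p | n).
Proof.
  assert (forall k : nat, forall n, 1 < n -> n <= Z.of_nat k -> exists p, prime p /\ (p | n)).
  { induction k as [|k IH]; intros m Hm Hk; [lia|].
    destruct (prime_dec m) as [Hp|Hp].
    - exists m. split; auto. apply Z.divide_refl.
    - destruct (not_prime_divide m Hm Hp) as [d [Hd Hdm]].
      destruct (IH d ltac:(lia) ltac:(lia)) as [p [Hp' Hpd]].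
      exists p. split; auto. eapply Z.divide_trans; eauto. }
  intros Hn. apply (H (Z.to_nat n)); lia.
Qed.

Definition nod2 (c : Z) : Prop := forall q, prime q -> (q | c) -> q mod 3 <> 2.

Lemma nod2_mul q c : prime q -> q mod 3 <> 2 -> nod2 c -> nod2 (q * c).
Proof.
  intros Hq H3 Hc r Hr Hrd. pose proof (prime_ge_2 _ Hr). pose proof (prime_ge_2 _ Hq).
  destruct (prime_mult _ Hr _ _ Hrd) as [h|h].
  - destruct (prime_divisors _ Hq _ h) as [e|[e|[e|e]]]; try lia. subst r. auto.
  - apply Hc; auto.
Qed.

Lemma Phi (k : nat) : forall M c a b, 0 < M -> M <= Z.of_nat k -> 0 < c -> nod2 c ->
  M * c = Qf a b -> Sset M.
Proof.
  induction k as [|k IH]; intros M c a b HM Hk Hc Hn HQ; [lia|].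
  destruct (Z.eq_dec M 1) as [->|HMne1]; [apply S_1|].
  destruct (exists_prime_div M ltac:(lia)) as [q [Hq [M1 HM1q]]].
  pose proof (prime_ge_2 _ Hq) as Hq2.
  assert (HM1 : 0 < M1) by nia.
  assert (Hlt : M1 < M) by nia.
  assert (Hr : q mod 3 = 0 \/ q mod 3 = 1 \/ q mod 3 = 2).
  { pose proof (Z.mod_pos_bound q 3 ltac:(lia)). lia. }
  destruct Hr as [H0|[H1|H2]].
  - assert (q = 3).
    { assert (Hd : (3 | q)) by (apply Z.mod_divide; lia).
      destruct (prime_divisors _ Hq _ Hd) as [e|[e|[e|e]]]; lia. }
    subst q M. rewrite Z.mul_comm. apply S_3.
    apply (IH M1 (3 * c) a b); try lia; try (rewrite <- HQ; ring).
    apply nod2_mul; auto. rewrite H0. lia.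
  - subst M. rewrite Z.mul_comm. apply S_p; auto.
    apply (IH M1 (q * c) a b); try lia; try (rewrite <- HQ; ring).
    apply nod2_mul; auto. lia.
  - assert (Hqd : (q | Qf a b)) by (exists (M1 * c); rewrite <- HQ, HM1q; ring).
    destruct (ZL1 q a b Hq H2 Hqd) as [[a1 Ha] [b1 Hb]].
    assert (EQ : Qf a b = q * q * Qf a1 b1) by (rewrite Ha, Hb; unfold Qf; ring).
    assert (E1 : M1 * c = q * Qf a1 b1).
    { apply (Z.mul_reg_l _ _ q); [lia|]. transitivity (M * c); [rewrite HM1q; ring|].
      rewrite HQ, EQ; ring. }
    assert (Hd1 : (q | M1 * c)) by (exists (Qf a1 b1); rewrite E1; ring).
    destruct (prime_mult _ Hq _ _ Hd1) as [[M2 HM2]|Hqc].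
    + subst M1. assert (HM2p : 0 < M2) by nia.
      assert (S2 : Sset M2).
      { apply (IH M2 c a1 b1); try lia; auto.
        - nia.
        - apply (Z.mul_reg_l _ _ q); [lia|]. rewrite <- E1. ring. }
      subst M. replace (M2 * q * q) with (q * q * M2) by ring. apply S_sq; auto. lia.
    + exfalso. apply (Hn q Hq Hqc). auto.
Qed.

Lemma S_Q a b : 0 < Qf a b -> Sset (Qf a b).
Proof.
  intros H. apply (Phi (Z.to_nat (Qf a b)) (Qf a b) 1 a b); try lia.
  intros q Hq Hd. pose proof (prime_ge_2 _ Hq). apply Z.divide_pos_le in Hd; lia.
Qed.

Open Scope Z_scope.

Lemma Red (k : nat) : forall M m n, Sset M -> 0 < n -> n <= m -> m <= 2*n -> m + n <= Z.of_nat k ->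
  exists u j d m' n', (u = 0 \/ u = 1) /\ 0 < j /\ 0 < d /\ prod_distinct_primes_1mod3 d /\
    0 < m' /\ 0 < n' /\ Z.gcd m' n' = 1 /\ ~ (3 | m' + n') /\ n' <= m' /\ m' <= 2*n' /\
    M*(2*m-n)*n = 3^u*j^2*d*(2*m'-n')*n'.
Proof.
  induction k as [|k IH]; intros M m n HS Hn H1 H2 Hk; [lia|].
  pose (g := Z.gcd m n).
  assert (Hg0 : 0 <= g) by apply Z.gcd_nonneg.
  assert (Hgn : g <> 0).
  { intro E. apply Z.gcd_eq_0 in E. lia. }
  destruct (Z.eq_dec g 1) as [Hg1|Hg1].
  - destruct (classic (3 | m + n)) as [[w Hw]|H3].
    + assert (HS' : Sset (3*M)) by (apply S_3; auto).
      destruct (IH (3*M) w (m - w) HS' ltac:(lia) ltac:(lia) ltac:(lia) ltac:(lia))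
        as [u [j [d [m' [n' [A1 [A2 [A3 [A4 [A5 [A6 [A7 [A8 [A9 [A10 A11]]]]]]]]]]]]]]].
      exists u, j, d, m', n'. repeat (split; [assumption|]).
      rewrite <- A11. assert (n = w * 3 - m) by lia. subst n. ring.
    + destruct HS as [u [j [d [Hu [Hj [Hd [Hp E]]]]]]].
      exists u, j, d, m, n. repeat (split; [first [assumption|lia]|]).
      subst M. ring.
  - assert (Hg2 : 1 < g) by lia.
    destruct (Z.gcd_divide_l m n) as [m1 Hm1]. destruct (Z.gcd_divide_r m n) as [n1 Hn1].
    fold g in Hm1, Hn1.
    assert (HS' : Sset (g*g*M)) by (apply S_sq; auto; lia).
    assert (Hn1p : 0 < n1) by nia.
    destruct (IH (g*g*M) m1 n1 HS' Hn1p ltac:(nia) ltac:(nia) ltac:(nia))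
        as [u [j [d [m' [n' [A1 [A2 [A3 [A4 [A5 [A6 [A7 [A8 [A9 [A10 A11]]]]]]]]]]]]]]].
    exists u, j, d, m', n'. repeat (split; [assumption|]).
    rewrite <- A11. rewrite Hm1, Hn1. ring.
Qed.

Open Scope Z_scope.

Lemma sq_le_cancel x y : 0 <= x -> 0 <= y -> x * x <= y * y -> x <= y.
Proof. intros. nia. Qed.

Lemma assembly g h e Q0 P D Qs Qt Qv w :
  0 < g -> h <> 0 -> (e = 1 \/ e = 3) -> 0 < Q0 -> 0 < P ->
  e * D = - g * h * Q0 -> Qs = g*g*Q0 -> Qt = h*h*P -> e*e*P = 3*Q0 ->
  Qs + Qt = 4*Qv -> Qv <= Qs -> Qv <= Qt -> g*e - h = 2*w ->
  exists M m n, (M = Q0 \/ M = P) /\ 0 < n /\ n <= m /\ m <= 2*n /\ Z.abs D = M*(2*m-n)*n.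
Proof.
  intros Hg Hh He HQ0 HP HD Hs Ht HeP HQ H1 H2 Hw.
  assert (HA : Qs <= 3 * Qt) by lia. assert (HB : Qt <= 3 * Qs) by lia.
  destruct (Z_lt_le_dec 0 h) as [hp|hn].
  - destruct He as [-> | ->].
    + assert (E : P = 3 * Q0) by lia. subst P.
      assert (g*g <= (3*h)*(3*h)) by nia. assert (h*h <= g*g) by nia.
      assert (g <= 3*h) by (apply sq_le_cancel; lia). assert (h <= g) by (apply sq_le_cancel; lia).
      exists Q0, (g - w), h. split; [auto|]. repeat split; try lia.
    + assert (E : Q0 = 3 * P) by lia. subst Q0.
      assert (g*g <= h*h) by nia. assert (h*h <= (3*g)*(3*g)) by nia.
      assert (h <= 3*g) by (apply sq_le_cancel; lia). assert (g <= h) by (apply sq_le_cancel; lia).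
      exists P, (2*g - w), g. split; [auto|]. repeat split; try lia.
  - assert (hn' : h < 0) by lia. set (k := -h) in *. assert (Ek : h = -k) by lia. clearbody k. subst h.
    destruct He as [-> | ->].
    + assert (E : P = 3 * Q0) by lia. subst P.
      assert (g*g <= (3*k)*(3*k)) by nia. assert (k*k <= g*g) by nia.
      assert (g <= 3*k) by (apply sq_le_cancel; lia). assert (k <= g) by (apply sq_le_cancel; lia).
      exists Q0, w, k. split; [auto|]. repeat split; try lia.
    + assert (E : Q0 = 3 * P) by lia. subst Q0.
      assert (g*g <= k*k) by nia. assert (k*k <= (3*g)*(3*g)) by nia.
      assert (k <= 3*g) by (apply sq_le_cancel; lia). assert (g <= k) by (apply sq_le_cancel; lia).
      exists P, (w - g), g. split; [auto|]. repeat split; try lia.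
Qed.

Lemma gcd_decomp x y : (x <> 0 \/ y <> 0) -> exists g x0 y0, 0 < g /\ x = g*x0 /\ y = g*y0 /\ Z.gcd x0 y0 = 1.
Proof.
  intros H. pose (g := Z.gcd x y).
  assert (Hg : 0 < g).
  { assert (0 <= g) by apply Z.gcd_nonneg. assert (g <> 0); [|lia].
    intro E. apply Z.gcd_eq_0 in E. lia. }
  exists g, (x / g), (y / g). split; [auto|]. split; [|split].
  - apply Zdivide_Zdiv_eq; auto. apply Z.gcd_divide_l.
  - apply Zdivide_Zdiv_eq; auto. apply Z.gcd_divide_r.
  - apply Z.gcd_div_gcd; auto; lia.
Qed.

Lemma Core a b c e : Qf a b = Qf c e -> Qf a b <= Qf (a-c) (b-e) -> Qf a b <= Qf (a+c) (b+e) ->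
  a*e - b*c <> 0 ->
  exists M m n, 0 < M /\ rep M /\ 0 < n /\ n <= m /\ m <= 2*n /\ Z.abs (a*e - b*c) = M*(2*m-n)*n.
Proof.
  intros Hv Hm Hp HD.
  assert (Hs : a + c <> 0 \/ b + e <> 0).
  { apply NNPP; intro N. apply HD. assert (c = -a) by lia. assert (e = -b) by lia. subst. ring. }
  destruct (gcd_decomp _ _ Hs) as [g [a0 [b0 [Hg [Hs1 [Hs2 Hg1]]]]]].
  assert (Ha0 : a0 <> 0 \/ b0 <> 0).
  { apply NNPP; intro N. assert (a0 = 0) by tauto. assert (b0 = 0) by tauto. subst a0 b0.
    rewrite Z.mul_0_r in Hs1, Hs2. tauto. }
  assert (Hu : a0 - 2*b0 <> 0 \/ 2*a0 - b0 <> 0) by lia.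
  destruct (gcd_decomp _ _ Hu) as [e' [p1 [p2 [He' [Hu1 [Hu2 Hp1]]]]]].
  (* perpendicularity *)
  assert (Perp : (a-c)*(2*(a+c) - (b+e)) + (b-e)*(2*(b+e) - (a+c)) = 2*(Qf a b - Qf c e))
    by (unfold Qf; ring).
  rewrite Hv, Z.sub_diag, Z.mul_0_r, Hs1, Hs2 in Perp.
  assert (Perp2 : e' * ((a-c)*p2 - (b-e)*p1) = 0).
  { assert (g * (e' * ((a-c)*p2 - (b-e)*p1)) = 0) as G0; [|apply Z.mul_eq_0 in G0; lia].
    transitivity ((a-c)*(e'*p2)*g - (b-e)*(e'*p1)*g); [ring|]. rewrite <- Hu1, <- Hu2. lia. }
  assert (Perp3 : (a-c)*p2 = (b-e)*p1) by (apply Z.mul_eq_0 in Perp2; lia).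
  destruct (Z.gcd_bezout _ _ _ Hp1) as [x [y Bez]].
  pose (h := x*(a-c) + y*(b-e)).
  assert (Ht1 : a - c = h * p1).
  { transitivity ((a-c)*(x*p1 + y*p2)); [rewrite Bez; ring|].
    transitivity (h*p1 + y*((a-c)*p2 - (b-e)*p1)); [unfold h; ring|]. rewrite Perp3. ring. }
  assert (Ht2 : b - e = h * p2).
  { transitivity ((b-e)*(x*p1 + y*p2)); [rewrite Bez; ring|].
    transitivity (h*p2 - x*((a-c)*p2 - (b-e)*p1)); [unfold h; ring|]. rewrite Perp3. ring. }
  clearbody h.
  assert (Hh : h <> 0).
  { intro E. subst h. apply HD. assert (a = c) by lia. assert (b = e) by lia. subst. ring. }
  assert (He3 : e' = 1 \/ e' = 3).
  { assert (D1 : (e' | 3*a0)) by (exists (2*p2 - p1); lia).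
    assert (D2 : (e' | 3*b0)) by (exists (p2 - 2*p1); lia).
    assert (D3 : (e' | Z.gcd (3*a0) (3*b0))) by (apply Z.gcd_greatest; auto).
    rewrite Z.gcd_mul_mono_l_nonneg, Hg1 in D3 by lia.
    assert (e' <= 3) by (apply Z.divide_pos_le; [lia|auto]).
    destruct D3 as [z Hz].
    assert (e' = 1 \/ e' = 2 \/ e' = 3) as [E|[E|E]] by lia; auto. lia. }
  set (D := a*e - b*c).
  set (Q0 := Qf a0 b0). set (P := Qf p1 p2).
  assert (HQ0 : 0 < Q0) by (apply Qf_pos; auto).
  assert (HP : 0 < P).
  { apply Qf_pos. apply NNPP; intro N. assert (p1 = 0) by tauto. assert (p2 = 0) by tauto. subst p1 p2.
    rewrite Z.mul_0_r in Hu1, Hu2. lia. }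
  assert (E1 : 2*D = g*h*(p1*b0 - a0*p2)).
  { transitivity ((a-c)*(b+e) - (a+c)*(b-e)); [unfold D; ring|]. rewrite Ht1, Ht2, Hs1, Hs2. ring. }
  assert (E2 : e'*(p1*b0 - a0*p2) = -2*Q0).
  { transitivity ((e'*p1)*b0 - a0*(e'*p2)); [ring|]. rewrite <- Hu1, <- Hu2. unfold Q0, Qf. ring. }
  assert (F1 : e' * D = - g * h * Q0).
  { assert (e'*(2*D) = g*h*(e'*(p1*b0 - a0*p2))) by (rewrite E1; ring). rewrite E2 in H. lia. }
  assert (F2 : Qf (a+c) (b+e) = g*g*Q0) by (rewrite Hs1, Hs2; unfold Q0, Qf; ring).
  assert (F3 : Qf (a-c) (b-e) = h*h*P) by (rewrite Ht1, Ht2; unfold P, Qf; ring).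
  assert (F4 : e'*e'*P = 3*Q0).
  { unfold P, Q0, Qf. transitivity ((e'*p1)*(e'*p1) - (e'*p1)*(e'*p2) + (e'*p2)*(e'*p2)); [ring|].
    rewrite <- Hu1, <- Hu2. ring. }
  assert (F5 : Qf (a+c) (b+e) + Qf (a-c) (b-e) = 4 * Qf a b) by (transitivity (2*Qf a b + 2*Qf c e); [unfold Qf; ring|lia]).
  assert (F6 : exists w, g*e' - h = 2*w).
  { assert (Pa : (g*e' - h)*a0 = 2*(c*e' - h*b0)).
    { transitivity (e'*(g*a0) - h*(e'*p1) - 2*h*b0); [rewrite <- Hu1; ring|].
      rewrite <- Hs1. transitivity (e'*((a+c) - (a-c)) - 2*h*b0); [rewrite Ht1; ring|]. ring. }
    assert (Pb : (g*e' - h)*b0 = 2*(e*e' + h*a0 - h*b0)).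
    { transitivity (e'*(g*b0) - h*(e'*p2) + 2*h*a0 - 2*h*b0); [rewrite <- Hu2; ring|].
      rewrite <- Hs2. transitivity (e'*((b+e) - (b-e)) + 2*h*a0 - 2*h*b0); [rewrite Ht2; ring|]. ring. }
    destruct (Z.Even_or_Odd (g*e' - h)) as [[w Hw]|[r Hr]]; [exists w; auto|].
    exfalso. rewrite Hr in Pa, Pb.
    assert (D1 : (2 | a0)) by (exists (c*e' - h*b0 - r*a0); lia).
    assert (D2 : (2 | b0)) by (exists (e*e' + h*a0 - h*b0 - r*b0); lia).
    assert (D3 : (2 | Z.gcd a0 b0)) by (apply Z.gcd_greatest; auto).
    rewrite Hg1 in D3. apply Z.divide_pos_le in D3; lia. }
  destruct F6 as [w F6].
  destruct (assembly g h e' Q0 P D (Qf (a+c) (b+e)) (Qf (a-c) (b-e)) (Qf a b) w Hg Hh He3 HQ0 HP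
              F1 F2 F3 F4 F5 Hp Hm F6) as [M [m [n [HM [Hn [H1 [H2 H3]]]]]]].
  exists M, m, n. split; [destruct HM; subst; lia|]. split.
  - destruct HM as [->| ->]; [exists a0, b0|exists p1, p2]; reflexivity.
  - auto.
Qed.

Open Scope R_scope.

Lemma s3_pos : 0 < sqrt 3.
Proof. apply sqrt_lt_R0. lra. Qed.

Lemma s3_sq : sqrt 3 * sqrt 3 = 3.
Proof. apply sqrt_sqrt. lra. Qed.

Lemma lh_inj a b c d : lh a b = lh c d -> a = c /\ b = d.
Proof.
  unfold lh. intros H. injection H as H1 H2. pose proof s3_pos.
  assert (IZR b = IZR d) by nra. apply eq_IZR in H0. subst d.
  split; auto. apply eq_IZR. lra.
Qed.

Lemma lh_zero a b : lh a b = (0,0) -> a = 0%Z /\ b = 0%Z.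
Proof. intros H. apply lh_inj. rewrite H. unfold lh. f_equal; simpl; lra. Qed.

Lemma det2_lh a b c d : det2 (lh a b) (lh c d) = sqrt 3 / 2 * IZR (a*d - b*c).
Proof. unfold det2, lh. simpl. rewrite minus_IZR, !mult_IZR. field. Qed.

Lemma det_Lh_val : det_Lh = sqrt 3 / 2.
Proof.
  unfold det_Lh. rewrite det2_lh. simpl. rewrite Rmult_1_r. apply Rabs_right.
  pose proof s3_pos. lra.
Qed.

Lemma enorm_lh a b : enorm (lh a b) = sqrt (IZR (Qf a b)).
Proof.
  unfold enorm, lh, Qf. simpl. f_equal. rewrite plus_IZR, minus_IZR, !mult_IZR.
  pose proof s3_sq as H.
  transitivity (IZR a * IZR a - IZR a * IZR b + IZR b * IZR b / 4 * (1 + sqrt 3 * sqrt 3 / 1)); [simpl; field|].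
  rewrite H. field.
Qed.

Lemma lh_comb a b c d k l :
  (IZR k * fst (lh a b) + IZR l * fst (lh c d), IZR k * snd (lh a b) + IZR l * snd (lh c d))
  = lh (k*a + l*c) (k*b + l*d).
Proof. unfold lh. simpl. rewrite !plus_IZR, !mult_IZR. f_equal; field. Qed.

Lemma span_self_l v w : span_Z v w v.
Proof. exists 1%Z, 0%Z. destruct v; simpl. f_equal; ring. Qed.

Lemma span_self_r v w : span_Z v w w.
Proof. exists 0%Z, 1%Z. destruct w; simpl. f_equal; ring. Qed.

Lemma basis_det G v w v1 w1 : lattice_basis G v w -> lattice_basis G v1 w1 ->
  Rabs (det2 v1 w1) = Rabs (det2 v w).
Proof.
  intros [Hd HG] [Hd1 HG1].
  destruct (proj1 (HG v1) (proj2 (HG1 v1) (span_self_l v1 w1))) as [k1 [l1 E1]].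
  destruct (proj1 (HG w1) (proj2 (HG1 w1) (span_self_r v1 w1))) as [k2 [l2 E2]].
  destruct (proj1 (HG1 v) (proj2 (HG v) (span_self_l v w))) as [k3 [l3 E3]].
  destruct (proj1 (HG1 w) (proj2 (HG w) (span_self_r v w))) as [k4 [l4 E4]].
  assert (F1 : det2 v1 w1 = IZR (k1*l2 - l1*k2) * det2 v w).
  { rewrite E1, E2. unfold det2. simpl. rewrite minus_IZR, !mult_IZR. ring. }
  assert (F2 : det2 v w = IZR (k3*l4 - l3*k4) * det2 v1 w1).
  { rewrite E3, E4 at 1. unfold det2. simpl. rewrite minus_IZR, !mult_IZR. ring. }
  assert (F3 : IZR ((k3*l4 - l3*k4) * (k1*l2 - l1*k2)) = 1).
  { rewrite mult_IZR. apply (Rmult_eq_reg_r (det2 v w)); auto.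
    rewrite Rmult_1_l, Rmult_assoc, <- F1. symmetry. exact F2. }
  apply eq_IZR in F3. rewrite Z.mul_comm in F3. apply Z.mul_eq_1 in F3.
  assert (F4 : IZR (k1*l2 - l1*k2) = 1 \/ IZR (k1*l2 - l1*k2) = -1).
  { destruct F3 as [-> | ->]; [left|right]; reflexivity. }
  rewrite F1, Rabs_mult. destruct F4 as [-> | ->].
  - rewrite Rabs_R1. ring.
  - rewrite Rabs_left by lra. ring.
Qed.

Open Scope Z_scope.

Definition B2 v1 v2 w1 w2 := 2*v1*w1 + 2*v2*w2 - v1*w2 - v2*w1.

Lemma wr_int v1 v2 w1 w2 k l R : Qf v1 v2 = R -> Qf w1 w2 = R -> -R <= B2 v1 v2 w1 w2 <= R ->
  (k <> 0 \/ l <> 0) -> R <= Qf (k*v1 + l*w1) (k*v2 + l*w2).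
Proof.
  intros Hv Hw HB Hkl.
  assert (E : Qf (k*v1 + l*w1) (k*v2 + l*w2) = k*k*R + k*l*B2 v1 v2 w1 w2 + l*l*R).
  { transitivity (k*k*Qf v1 v2 + k*l*B2 v1 v2 w1 w2 + l*l*Qf w1 w2); [unfold Qf, B2; ring|rewrite Hv, Hw; ring]. }
  assert (HR : 0 <= R) by (rewrite <- Hv; apply Qf_nonneg).
  rewrite E. set (B := B2 v1 v2 w1 w2) in *.
  destruct (Z_le_gt_dec 0 (k*l)) as [Hp|Hn].
  - assert (0 <= (k*l)*(B + R)) by (apply Z.mul_nonneg_nonneg; lia).
    assert (H1 : 1 <= Qf k l) by (pose proof (Qf_pos k l Hkl); lia).
    assert (0 <= R * (Qf k l - 1)) by (apply Z.mul_nonneg_nonneg; lia).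
    unfold Qf in *. nia.
  - assert (0 <= (-(k*l))*(R - B)) by (apply Z.mul_nonneg_nonneg; lia).
    assert (H1 : 1 <= Qf k (-l)) by (pose proof (Qf_pos k (-l) ltac:(lia)); lia).
    assert (0 <= R * (Qf k (-l) - 1)) by (apply Z.mul_nonneg_nonneg; lia).
    unfold Qf in *. nia.
Qed.

Lemma ratio_to_Z m n : (0 < n)%Z -> (1 <= IZR m / IZR n <= 2)%R -> n <= m /\ m <= 2*n.
Proof.
  intros Hn [H1 H2]. assert (Hn' : (0 < IZR n)%R) by (apply IZR_lt; auto).
  assert (E : (IZR m = (IZR m / IZR n) * IZR n)%R) by (field; lra).
  split.
  - apply le_IZR. nra.
  - apply le_IZR. rewrite mult_IZR. nra.
Qed.

Lemma Z_to_ratio m n : 0 < n -> n <= m -> m <= 2*n -> (1 <= IZR m / IZR n <= 2)%R.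
Proof.
  intros Hn H1 H2. assert (Hn' : (0 < IZR n)%R) by (apply IZR_lt; auto).
  apply IZR_le in H1. apply IZR_le in H2. rewrite mult_IZR in H2. simpl in H2.
  split.
  - apply (Rmult_le_reg_r (IZR n)); auto. unfold Rdiv. rewrite Rmult_assoc, Rinv_l by lra. lra.
  - apply (Rmult_le_reg_r (IZR n)); auto. unfold Rdiv. rewrite Rmult_assoc, Rinv_l by lra. lra.
Qed.

Lemma enorm_le a b c d : Qf a b <= Qf c d -> (enorm (lh a b) <= enorm (lh c d))%R.
Proof. intros H. rewrite !enorm_lh. apply sqrt_le_1_alt. apply IZR_le. auto. Qed.

Lemma enorm_le_inv a b c d : (enorm (lh a b) <= enorm (lh c d))%R -> Qf a b <= Qf c d.
Proof.
  rewrite !enorm_lh. intros H. apply le_IZR. apply sqrt_le_0; auto; apply IZR_le; apply Qf_nonneg.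
Qed.

Open Scope R_scope.

Theorem corollary4p10 : forall x : R,
  (exists G : vec -> Prop,
      full_rank_sublattice_Lh G /\ well_rounded G /\ lattice_index G x) <->
  (exists u j d m n : Z,
      (u = 0%Z \/ u = 1%Z) /\
      (0 < j)%Z /\ (0 < d)%Z /\ (0 < m)%Z /\ (0 < n)%Z /\
      prod_distinct_primes_1mod3 d /\
      Z.gcd m n = 1%Z /\
      ~ (3 | m + n)%Z /\
      1 <= IZR m / IZR n <= 2 /\
      x = IZR (3 ^ u * j ^ 2 * d * (2 * m - n) * n)).
Proof.
  intros x; split.
  - intros [G [[_ Hsub] [[v [w [Bvw [Mv Mw]]]] [d0 [[v1 [w1 [B1 Hd0]]] Hx]]]]].
    assert (Gv : G v) by (apply (proj2 (proj2 Bvw v)); apply span_self_l).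
    assert (Gw : G w) by (apply (proj2 (proj2 Bvw w)); apply span_self_r).
    assert (Hbd := basis_det G v w v1 w1 Bvw B1).
    destruct (Hsub v Gv) as [a [b Ev]]. destruct (Hsub w Gw) as [c [e Ew]]. subst v w.
    assert (HD : (a*e - b*c <> 0)%Z).
    { intro E. apply (proj1 Bvw). rewrite det2_lh, E. simpl. ring. }
    assert (Nw : lh c e <> (0,0)).
    { intro E. apply lh_zero in E. destruct E; subst. apply HD. ring. }
    assert (Nv : lh a b <> (0,0)).
    { intro E. apply lh_zero in E. destruct E; subst. apply HD. ring. }
    assert (Q1 := enorm_le_inv _ _ _ _ (Mv _ Gw Nw)).
    assert (Q2 := enorm_le_inv _ _ _ _ (Mw _ Gv Nv)).
    assert (Gm : G (lh (a-c) (b-e))).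
    { apply (proj2 (proj2 Bvw _)). exists 1%Z, (-1)%Z. rewrite lh_comb. f_equal; ring. }
    assert (Gp : G (lh (a+c) (b+e))).
    { apply (proj2 (proj2 Bvw _)). exists 1%Z, 1%Z. rewrite lh_comb. f_equal; ring. }
    assert (Nm : lh (a-c) (b-e) <> (0,0)).
    { intro E. apply lh_zero in E. destruct E. apply HD.
      assert (a = c) by lia. assert (b = e) by lia. subst. ring. }
    assert (Np : lh (a+c) (b+e) <> (0,0)).
    { intro E. apply lh_zero in E. destruct E. apply HD.
      assert (c = (-a)%Z) by lia. assert (e = (-b)%Z) by lia. subst. ring. }
    assert (Q3 := enorm_le_inv _ _ _ _ (Mv _ Gm Nm)).
    assert (Q4 := enorm_le_inv _ _ _ _ (Mv _ Gp Np)).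
    destruct (Core a b c e ltac:(lia) Q3 Q4 HD) as [M [m [n [HM [[al [be HMab]] [Hn [H1 [H2 Habs]]]]]]]].
    assert (HS : Sset M) by (rewrite HMab; apply S_Q; lia).
    destruct (Red (Z.to_nat (m+n)) M m n HS Hn H1 H2 ltac:(lia))
      as [u [j [dd [m' [n' [A1 [A2 [A3 [A4 [A5 [A6 [A7 [A8 [A9 [A10 A11]]]]]]]]]]]]]]].
    exists u, j, dd, m', n'.
    do 8 (split; [assumption|]). split; [apply Z_to_ratio; auto|].
    rewrite Hx, Hd0, Hbd, det2_lh, det_Lh_val, Rabs_mult, Rabs_Zabs, Habs, A11.
    rewrite Rabs_right by (pose proof s3_pos; lra). field. pose proof s3_pos; lra.
  - intros [u [j [dd [m [n [Hu [Hj [Hd [Hm [Hn [Hp [Hg [H3 [Hr Hx]]]]]]]]]]]]]].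
    destruct (ratio_to_Z m n Hn Hr) as [H1 H2].
    set (M := (3 ^ u * j ^ 2 * dd)%Z).
    assert (HS : Sset M) by (exists u, j, dd; repeat split; auto).
    destruct (rep_S M HS) as [p [q HMpq]].
    assert (HMpos : (0 < M)%Z).
    { unfold M. assert (0 < 3 ^ u)%Z by (apply Z.pow_pos_nonneg; lia).
      assert (0 < j ^ 2)%Z by (apply Z.pow_pos_nonneg; lia). nia. }
    set (V1 := (p*m - q*(m-n))%Z). set (V2 := (p*(m-n) + q*m - q*(m-n))%Z).
    set (W1 := (p*(m-n) - q*m)%Z). set (W2 := (p*m + q*(m-n) - q*m)%Z).
    assert (Hdet : (V1*W2 - V2*W1 = M * ((2*m - n) * n))%Z).
    { rewrite HMpq. unfold V1, V2, W1, W2, Qf. ring. }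
    assert (HQV : Qf V1 V2 = (M * Qf m (m-n))%Z).
    { rewrite HMpq. unfold V1, V2, Qf. ring. }
    assert (HQW : Qf W1 W2 = Qf V1 V2).
    { unfold V1, V2, W1, W2, Qf. ring. }
    assert (HB : B2 V1 V2 W1 W2 = (M * B2 m (m-n) (m-n) m)%Z).
    { rewrite HMpq. unfold V1, V2, W1, W2, B2, Qf. ring. }
    assert (HBb : (- Qf V1 V2 <= B2 V1 V2 W1 W2 <= Qf V1 V2)%Z).
    { rewrite HB, HQV. unfold B2, Qf.
      assert (0 <= (2*m - (m-n)) * (m - 2*(m-n)))%Z by (apply Z.mul_nonneg_nonneg; lia).
      assert (0 <= m * (m-n))%Z by (apply Z.mul_nonneg_nonneg; lia).
      split.
      - assert (0 <= M * (3*(m*(m-n))))%Z by (apply Z.mul_nonneg_nonneg; lia). nia.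
      - assert (0 <= M * ((2*m - (m-n)) * (m - 2*(m-n))))%Z by (apply Z.mul_nonneg_nonneg; lia). nia. }
    assert (Hdet0 : (0 < V1*W2 - V2*W1)%Z).
    { rewrite Hdet. apply Z.mul_pos_pos; auto. apply Z.mul_pos_pos; lia. }
    set (v := lh V1 V2). set (w := lh W1 W2).
    assert (Bas : lattice_basis (span_Z v w) v w).
    { split; [|intro; tauto]. unfold v, w. rewrite det2_lh.
      apply IZR_lt in Hdet0. pose proof s3_pos. intro E. nra. }
    exists (span_Z v w). split; [split|split].
    + exists v, w. exact Bas.
    + intros y [k [l Ey]]. unfold v, w in Ey. rewrite lh_comb in Ey. eexists; eexists; exact Ey.
    + exists v, w. split; [exact Bas|]. split.
      * intros y [k [l Ey]] Hy0. unfold v, w in Ey. rewrite lh_comb in Ey. rewrite Ey. unfold v.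
        rewrite !enorm_lh. apply sqrt_le_1_alt, IZR_le. apply wr_int with (R := Qf V1 V2); auto.
        apply NNPP; intro N. apply Hy0. rewrite Ey.
        assert (k = 0%Z) by tauto. assert (l = 0%Z) by tauto. subst k l. unfold lh. simpl. f_equal; lra.
      * intros y [k [l Ey]] Hy0. unfold v, w in Ey. rewrite lh_comb in Ey. rewrite Ey. unfold w.
        rewrite !enorm_lh, HQW. apply sqrt_le_1_alt, IZR_le. apply wr_int with (R := Qf V1 V2); auto.
        apply NNPP; intro N. apply Hy0. rewrite Ey.
        assert (k = 0%Z) by tauto. assert (l = 0%Z) by tauto. subst k l. unfold lh. simpl. f_equal; lra.
    + exists (Rabs (det2 v w)). split.
      * exists v, w. split; [exact Bas|reflexivity].
      * rewrite Hx. unfold v, w. rewrite det2_lh, det_Lh_val, Rabs_mult, Rabs_Zabs, Hdet.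
        rewrite Z.abs_eq by (apply Z.mul_nonneg_nonneg; [lia|apply Z.mul_nonneg_nonneg; lia]).
        rewrite Rabs_right by (pose proof s3_pos; lra). unfold M.
        rewrite !mult_IZR. field. pose proof s3_pos; lra.
Qed.
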